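(* Let $\mathbf{k}$ be an algebraically closed field of characteristic zero, $t\ge2$, and $(n_1,\dots,n_t)$ a dimension vector with $n_1<n_2<\cdots<n_t$. Let $U_i=\mathbf{k}^{n_i}$ and let $Z$ be the variety of tuples $z=(A_1,B_1,\dots,A_{t-1},B_{t-1})$ with $A_i:U_i\to U_{i+1}$, $B_i:U_{i+1}\to U_i$ linear, satisfying $B_1A_1=0$ and $B_{i+1}A_{i+1}=A_iB_i$ for $i=1,\dots,t-2$. Then a point $z\in Z$ belongs to the semistable locus $Z^{ss}$ if and only if $A_1,\dots,A_{t-1}$ are all injective.
   Context: Here $Z^{ss}$ is Nakajima's semistable locus for the action of $H=GL_{n_1}\times\cdots\times GL_{n_{t-1}}$ (acting by $A_i\mapsto h_{i+1}A_ih_i^{-1}$, $B_i\mapsto h_iB_ih_{i+1}^{-1}$, $h_t=\mathrm{id}$) with respect to the character $\chi(h)=\prod_i\det(h_i)^{-1}$; by Nakajima's criterion this is the set of $z\in Z$ such that the only tuple of subspaces $W_i\subseteq U_i$ ($i=1,\dots,t-1$) with $A_i(W_i)\subseteq W_{i+1}$ and $B_i(W_{i+1})\subseteq W_i$ for $i=1,\dots,t-2$ and $A_{t-1}(W_{t-1})=0$ is $W_1=\cdots=W_{t-1}=0$. *)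

(* Defs.v *)
From HB Require Import structures.
From mathcomp Require Import all_boot all_order all_algebra.
Set Implicit Arguments. Unset Strict Implicit. Unset Printing Implicit Defensive.
Import GRing.Theory.
Local Open Scope ring_scope.

(* Conventions (0-based): the paper's U_1,...,U_t are U_0,...,U_{t-1},
   with U_i = 'rV[k]_(n i).  Linear maps act on row vectors on the right:
   A i : U_i -> U_{i+1} is v |-> v *m A i, B i : U_{i+1} -> U_i is w |-> w *m B i.
   Only indices i < t-1 are relevant. Composition g \o f is f *m g. *)

Definition in_Z (k : fieldType) (t : nat) (n : nat -> nat)
  (A : forall i, 'M[k]_(n i, n i.+1)) (B : forall i, 'M[k]_(n i.+1, n i)) : Prop :=
  A 0%N *m B 0%N = 0 /\
  (forall i : nat, (i.+2 < t)%N -> A i.+1 *m B i.+1 = B i *m A i).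

(* Nakajima's semistability criterion: subspaces W_i <= U_i are represented by
   the row spaces of square matrices W i (mxalgebra). *)
Definition semistable (k : fieldType) (t : nat) (n : nat -> nat)
  (A : forall i, 'M[k]_(n i, n i.+1)) (B : forall i, 'M[k]_(n i.+1, n i)) : Prop :=
  forall W : forall i, 'M[k]_(n i),
    (forall i : nat, (i.+2 < t)%N ->
        (W i *m A i <= W i.+1)%MS /\ (W i.+1 *m B i <= W i)%MS) ->
    W t.-2 *m A t.-2 = 0 ->
    forall i : nat, (i.+1 < t)%N -> W i = 0.

(* Main.v *)
Require Import Defs.
From HB Require Import structures.
From mathcomp Require Import all_boot all_order all_algebra.
From mathcomp Require Import zify.
Import GRing.Theory.
Local Open Scope ring_scope.

Lemma inj_mx0 (k : fieldType) m p q (M : 'M[k]_(m, p)) (X : 'M[k]_(q, m)) :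
  injective (fun v : 'rV[k]_m => v *m M) -> X *m M = 0 -> X = 0.
Proof.
move=> inj XM0; apply/row_matrixP => j; rewrite row0; apply: inj.
by rewrite /= -row_mul XM0 row0 mul0mx.
Qed.

Arguments inj_mx0 {k m p q M X}.

Theorem proposition3 (k : closedFieldType) (Hchar : [pchar k] =i pred0)
  (t : nat) (Ht : (2 <= t)%N) (n : nat -> nat)
  (Hn : forall i : nat, (i.+1 < t)%N -> (n i < n i.+1)%N)
  (A : forall i, 'M[k]_(n i, n i.+1)) (B : forall i, 'M[k]_(n i.+1, n i))
  (HZ : in_Z t A B) :
  semistable t A B <->
  (forall i : nat, (i.+1 < t)%N -> injective (fun v : 'rV[k]_(n i) => v *m A i)).
Proof.
case: HZ => HZ1 HZ2; split.
- move=> ss i lt v w /= e.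
  have K := ss (fun i => kermx (A i)).
  have K0 : kermx (A i) = 0.
    apply: K => //; last by rewrite mulmx_ker.
    move=> j lj; split; first by rewrite mulmx_ker sub0mx.
    by apply/sub_kermxP; rewrite -mulmxA -HZ2 // mulmxA mulmx_ker mul0mx.
  apply/eqP; rewrite -subr_eq0; apply/eqP; apply/eqP; rewrite -submx0 -K0.
  by apply/sub_kermxP; rewrite mulmxBl e subrr.
- move=> inj W HW Wl.
  suff H : forall d i, (i.+1 < t)%N -> (t.-2 - i)%N = d -> W i = 0.
    by move=> i li; exact: (H _ i li erefl).
  elim=> [|d IH] i li ed.
    have ei : i = t.-2 by lia.
    have lt2 : ((t.-2).+1 < t)%N by lia.
    by rewrite ei; exact: (inj_mx0 (inj _ lt2) Wl).
  have l2 : (i.+2 < t)%N by lia.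
  have W1 := IH i.+1 l2 ltac:(lia).
  apply: (inj_mx0 (inj _ li)); apply/eqP; rewrite -submx0 -W1.
  by case: (HW i l2).
Qed.
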